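(* Let $(G,\alpha)$ be a finite Hom-group and $H\preceq G$. Then the set of left cosets $\{gH: g\in G\}$, where $gH=\{gh:h\in H\}$, is a partition of $G$.
   Context: A Hom-group is a tuple $(G,\mu,1,\alpha)$ where $G$ is a set, $\mu:G\times G\to G$ is a binary operation written $\mu(g,h)=gh$, $1\in G$ is a distinguished element, and $\alpha:G\to G$ is a bijection, such that: (1) Hom-associativity: $\alpha(g)(hk)=(gh)\alpha(k)$ for all $g,h,k\in G$; (2) $\alpha(gk)=\alpha(g)\alpha(k)$ for all $g,k$; (3) Hom-unitality: $g1=1g=\alpha(g)$ for all $g$, and $\alpha(1)=1$; (4) for every $g\in G$ there exists $g^{-1}\in G$ with $gg^{-1}=g^{-1}g=1$ (such an inverse is unique). A Hom-subgroup of $(G,\alpha)$ is a subset $H\subseteq G$ such that $H$, with the restriction of the multiplication of $G$, the element $1$, and the restriction of $\alpha$, is itself a Hom-group (in particular $1\in H$, $H$ is closed under multiplication and inverses, and $\alpha$ restricts to a bijection $H\to H$). We write $H\preceq G$. *)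

(* Defs.v *)
From HB Require Import structures.
From mathcomp Require Import all_boot.
Set Implicit Arguments. Unset Strict Implicit. Unset Printing Implicit Defensive.

Record is_hom_group_on (T : finType) (S : {set T})
    (mul : T -> T -> T) (one : T) (alpha : T -> T) : Prop := {
  hg_one : one \in S;
  hg_mul : forall g h, g \in S -> h \in S -> mul g h \in S;
  hg_alpha : forall g, g \in S -> alpha g \in S;
  hg_alpha_inj : forall g h, g \in S -> h \in S -> alpha g = alpha h -> g = h;
  hg_alpha_surj : forall h, h \in S -> exists2 g, g \in S & alpha g = h;
  hg_assoc : forall g h k, g \in S -> h \in S -> k \in S ->
      mul (alpha g) (mul h k) = mul (mul g h) (alpha k);
  hg_alpha_mul : forall g k, g \in S -> k \in S ->
      alpha (mul g k) = mul (alpha g) (alpha k);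
  hg_unit : forall g, g \in S -> mul g one = alpha g /\ mul one g = alpha g;
  hg_alpha_one : alpha one = one;
  hg_inv : forall g, g \in S -> exists2 g', g' \in S & mul g g' = one /\ mul g' g = one
}.

Definition is_hom_group (T : finType) (mul : T -> T -> T) (one : T) (alpha : T -> T) :=
  is_hom_group_on [set: T] mul one alpha.

Definition hom_subgroup (T : finType) (mul : T -> T -> T) (one : T) (alpha : T -> T)
    (H : {set T}) := is_hom_group_on H mul one alpha.

Definition hlcoset (T : finType) (mul : T -> T -> T) (g : T) (H : {set T}) : {set T} :=
  [set mul g h | h in H].

(* Main.v *)
Require Import Defs.
From mathcomp Require Import all_boot.

Theorem mainTheorem8 (T : finType) (mul : T -> T -> T) (one : T) (alpha : T -> T)
    (HG : is_hom_group mul one alpha) (H : {set T}) (HH : hom_subgroup mul one alpha H) :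
  partition [set hlcoset mul g H | g in [set: T]] [set: T].
Proof.
have inT : forall x : T, x \in [set: T] by move=> x; rewrite in_setT.
have ainj : injective alpha.
  by move=> x y; apply: (hg_alpha_inj HG (inT x) (inT y)).
pose ai := invF ainj.
have aiK : forall x, alpha (ai x) = x by move=> x; rewrite /ai f_invF.
have aKi : forall x, ai (alpha x) = x by move=> x; rewrite /ai invF_f.
pose star g h := ai (mul g h).
have mulE : forall g h, mul g h = alpha (star g h) by move=> g h; rewrite aiK.
have amul : forall x y, alpha (mul x y) = mul (alpha x) (alpha y).
  by move=> x y; apply: (hg_alpha_mul HG (inT x) (inT y)).
have sA : forall g h k, star g (star h k) = star (star g h) k.
  move=> g h k; apply: (ainj); apply: (ainj); rewrite /star !aiK amul aiK.
  by rewrite (hg_assoc HG (inT g) (inT h) (inT k)) amul aiK.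

have s1 : forall g, star g one = g.
  by move=> g; rewrite /star (proj1 (hg_unit HG (inT g))) aKi.
have s1' : forall g, star one g = g.
  by move=> g; rewrite /star (proj2 (hg_unit HG (inT g))) aKi.
have aione : ai one = one by rewrite -{1}(hg_alpha_one HG) aKi.
have sH : forall u v, u \in H -> v \in H -> star u v \in H.
  move=> u v uH vH; rewrite /star; have := hg_mul HH uH vH.
  case/(hg_alpha_surj HH)=> w wH <-; by rewrite aKi.
have cosE : forall g x, x \in hlcoset mul g H -> exists2 h, h \in H & x = alpha (star g h).
  by move=> g x /imsetP[h hH ->]; exists h; rewrite // -mulE.
have sub : forall a b x, x \in hlcoset mul a H -> x \in hlcoset mul b H ->
    hlcoset mul a H \subset hlcoset mul b H.
  move=> a b x /cosE[h1 h1H ->] /cosE[h2 h2H /(ainj) E].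
  apply/subsetP=> y /cosE[h hH ->].
  have [h1' h1'H [e1 e2]] := hg_inv HH h1H.
  apply/imsetP; exists (star h2 (star h1' h)); first by rewrite !sH.
  have e : star h1 h1' = one by rewrite /star e1 aione.
  by rewrite mulE sA -E -sA (sA h1) e s1'.
rewrite /partition; apply/and3P; split.
- apply/eqP/setP=> x; rewrite inT; apply/bigcupP.
  exists (hlcoset mul (ai x) H); first by apply/imsetP; exists (ai x).
  apply/imsetP; exists one; first exact: (hg_one HH).
  by rewrite (proj1 (hg_unit HG (inT _))) aiK.
- apply/trivIsetP=> A B /imsetP[a _ ->] /imsetP[b _ ->] neq.
  apply/pred0P=> x /=; apply/negP=> /andP[xa xb].
  by move/negP: neq; apply; apply/eqP/eqP; rewrite eqEsubset (sub _ _ x) ?(sub _ _ x).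
- apply/negP=> /imsetP[g _ E].
  have : mul g one \in hlcoset mul g H by apply/imsetP; exists one; rewrite ?(hg_one HH).
  by rewrite -E inE.
Qed.
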